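(* Let $P=\sum_Ia_Ix^I\in\mathbb{R}[x_1,\dots,x_k]$, where $I=(i_1,\dots,i_k)$ ranges over $(\mathbb{N}\cup\{0\})^k$ and $x^I=x_1^{i_1}\cdots x_k^{i_k}$. Suppose $P$ is positive dominant, i.e. $A_I:=\sum_{I'\le I}a_{I'}>0$ for every multi-index $I$, where $I'\le I$ means $i'_j\le i_j$ for all $j$. Then $P>0$ on $[0,1]^k$. *)

(* Defs.v *)
From mathcomp Require Import all_boot all_order all_algebra.
From mathcomp Require Import mpoly.
Set Implicit Arguments. Unset Strict Implicit. Unset Printing Implicit Defensive.
Import Order.TTheory GRing.Theory Num.Theory.
Local Open Scope ring_scope.

(* Coefficients outside the support msupp P are zero, so summing over the
   support gives exactly the (finite) sum over all I' <= I. *)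
Definition cum_coef (R : nzRingType) (k : nat) (P : {mpoly R[k]}) (I : 'X_{1..k}) : R :=
  \sum_(I' <- msupp P | lem I' I) P@_I'.

Definition positive_dominant (R : realDomainType) (k : nat) (P : {mpoly R[k]}) : Prop :=
  forall I : 'X_{1..k}, 0 < cum_coef P I.

(* Main.v *)
Require Import Defs.
From mathcomp Require Import all_boot all_order all_algebra.
From mathcomp Require Import mpoly.
Import Order.TTheory GRing.Theory Num.Theory.
Local Open Scope ring_scope.

Lemma tele (R : comNzRingType) (y : R) (n t : nat) : (t <= n)%N ->
  \sum_(i < n) (t <= i)%:R * (y ^+ i * (1 - y)) + y ^+ n = y ^+ t.
Proof.
elim: n => [|n IH]; first by rewrite leqn0 => /eqP ->; rewrite big_ord0 add0r.
rewrite leq_eqVlt => /orP [/eqP ->|Htn].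
  rewrite big1 ?add0r // => i _; rewrite leqNgt ltn_ord.
  by rewrite mul0r.
rewrite ltnS in Htn; rewrite big_ord_recr /= -IH // Htn mul1r exprS.
rewrite -addrA; congr (_ + _); rewrite mulrBr mulr1 [y * _]mulrC.
by rewrite addrNK.
Qed.

Definition wj {R : nzRingType} (y : R) (N : nat) (i : 'I_N.+1) : R :=
  if (i < N)%N then y ^+ i * (1 - y) else y ^+ N.

Lemma col (R : comNzRingType) (y : R) (N t : nat) : (t <= N)%N ->
  \sum_(i < N.+1) (t <= i)%:R * wj y N i = y ^+ t.
Proof.
move=> Ht; rewrite big_ord_recr /= /wj /= ltnn Ht mul1r -(@tele _ y N t Ht).
congr (_ + _); apply: eq_bigr => i _ /=; by rewrite ltn_ord.
Qed.

Lemma boxsum (R : comNzRingType) (k N : nat) (x : 'I_k -> R) (t : 'I_k -> nat) :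
  (forall j, t j <= N)%N ->
  \sum_(f : {ffun 'I_k -> 'I_N.+1}) \prod_j ((t j <= f j)%:R * wj (x j) N (f j))
  = \prod_j x j ^+ t j.
Proof.
move=> Ht; rewrite -(bigA_distr_bigA (fun j (i : 'I_N.+1) => (t j <= i)%:R * wj (x j) N i)).
by apply: eq_bigr => j _; apply: col.
Qed.

Theorem lemma7p2 (R : realFieldType) (k : nat) (P : {mpoly R[k]}) :
  positive_dominant P ->
  forall x : 'I_k -> R, (forall j : 'I_k, 0 <= x j <= 1) -> 0 < P.@[x].
Proof.
move=> Hpos x Hx.
pose N := (\max_(m <- msupp P) \max_(j < k) m j)%N.
have HN : forall m, m \in msupp P -> forall j, (m j <= N)%N.
  move=> m Hm j; rewrite /N; apply: (leq_trans _ (@leq_bigmax_seq _ _ (fun _ => true) (fun m : 'X_{1..k} => \max_(j < k) m j) _ Hm (erefl true))).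
  by rewrite (bigD1 j) //= leq_maxl.
pose toM (f : {ffun 'I_k -> 'I_N.+1}) : 'X_{1..k} := [multinom (f j : nat) | j < k].
pose w (f : {ffun 'I_k -> 'I_N.+1}) := \prod_j wj (x j) N (f j).
have wj_ge0 : forall j (i : 'I_N.+1), 0 <= wj (x j) N i.
  move=> j i; have /andP [h0 h1] := Hx j; rewrite /wj; case: ifP => _.
    by rewrite mulr_ge0 ?exprn_ge0 // subr_ge0.
  by rewrite exprn_ge0.
have w_ge0 : forall f, 0 <= w f by move=> f; apply: prodr_ge0 => j _.
have ind : forall (m : 'X_{1..k}) f,
    (lem m (toM f))%:R * w f = \prod_j ((m j <= f j)%:R * wj (x j) N (f j)).
  move=> m f; rewrite big_split /=; congr (_ * _).
  case: (boolP (lem m (toM f))) => H.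
    rewrite big1 // => j _; move/forallP: H => /(_ j); rewrite mnmE => ->.
    by [].
  have [j Hj] : exists j, ~~ (m j <= f j)%N.
    apply/existsP; move: H; rewrite /lem negb_forall => /existsP [j Hj].
    by apply/existsP; exists j; rewrite mnmE in Hj.
  by rewrite (bigD1 j) //= (negbTE Hj) mul0r.
have key : P.@[x] = \sum_f cum_coef P (toM f) * w f.
  rewrite mevalE.
  under [RHS]eq_bigr => f _ do rewrite /cum_coef mulr_suml big_mkcond /=.
  rewrite exchange_big /=; apply: eq_big_seq => m Hm.
  rewrite -(@boxsum _ k N x _ (HN m Hm)) mulr_sumr; apply: eq_bigr => f _.
  rewrite -ind; case: (lem m (toM f)); by rewrite ?mul1r ?mul0r ?mulr0.
have sum1 : \sum_f w f = 1.
  have H := @boxsum _ k N x (fun _ => 0%N) (fun _ => leq0n N).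
  rewrite [RHS]big1 in H; last by move=> j _ /=; exact: expr0.
  rewrite -H; apply: eq_bigr => f _.
  by apply: eq_bigr => j _; rewrite mul1r.
have [f /andP [_ Hf]] : exists f, true && (0 < w f).
  apply: psumr_neq0P => [f _|]; first exact: w_ge0.
  by rewrite sum1; apply/eqP; rewrite oner_neq0.
rewrite key (bigD1 f) //=; apply: ltr_wpDr.
  apply: sumr_ge0 => g _; apply: mulr_ge0 => //; exact: ltW (Hpos _).
exact: mulr_gt0.
Qed.
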